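(* A Poisson $n$-Lie algebra $\mathcal P$ of arbitrary dimension is nilpotent if and only if both its associative part $\mathcal P_A=(\mathcal P,\cdot)$ and its $n$-Lie part $\mathcal P_L=(\mathcal P,[-,\dots,-])$ are nilpotent.
   Context: A Poisson $n$-Lie algebra is a commutative associative algebra $(\mathcal P,\cdot)$ with an $n$-linear skew-symmetric bracket satisfying the fundamental identity $[x_1,\dots,x_{n-1},[y_1,\dots,y_n]]=\sum_{i=1}^n[y_1,\dots,[x_1,\dots,x_{n-1},y_i],\dots,y_n]$ and the Leibniz rule $[y\cdot z,x_2,\dots,x_n]=y\cdot[z,x_2,\dots,x_n]+z\cdot[y,x_2,\dots,x_n]$. Products/brackets of subspaces denote linear spans. $\mathcal P$ is nilpotent if $\mathcal P^s=0$ for some $s$, where $\mathcal P^1=\mathcal P$, $\mathcal P^{k+1}=[\mathcal P^k,\mathcal P,\dots,\mathcal P]+\mathcal P^k\cdot\mathcal P$. $\mathcal P_A$ is nilpotent if all products of some fixed number $s$ of elements vanish. $\mathcal P_L$ is nilpotent if $L^s=0$ for some $s$, where $L^1=\mathcal P$, $L^{k+1}=[L^k,\mathcal P,\dots,\mathcal P]$. *)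

(* Defs.v *)
From HB Require Import structures.
From mathcomp Require Import all_boot all_order all_algebra all_fingroup.
Set Implicit Arguments. Unset Strict Implicit. Unset Printing Implicit Defensive.
Import GRing.Theory.
Local Open Scope ring_scope.

Section PoissonNLie.
Variables (K : fieldType) (V : lmodType K) (n : nat).
Variable mul : V -> V -> V.
Variable br : ('I_n -> V) -> V.

Definition setarg (x : 'I_n -> V) (i : 'I_n) (z : V) : 'I_n -> V :=
  fun j => if j == i then z else x j.
Definition setlast (x : 'I_n -> V) (z : V) : 'I_n -> V :=
  fun j => if val j == n.-1 then z else x j.
Definition setfirst (x : 'I_n -> V) (z : V) : 'I_n -> V :=
  fun j => if val j == 0%N then z else x j.

Definition comm_assoc_bilinear : Prop :=
  [/\ (forall a u v w, mul (a *: u + v) w = a *: mul u w + mul v w),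
      (forall a u v w, mul w (a *: u + v) = a *: mul w u + mul w v),
      (forall u v, mul u v = mul v u) &
      (forall u v w, mul u (mul v w) = mul (mul u v) w)].

Definition multilinear : Prop :=
  forall (x : 'I_n -> V) (i : 'I_n) (a : K) (u v : V),
    br (setarg x i (a *: u + v)) = a *: br (setarg x i u) + br (setarg x i v).

Definition skew_symmetric : Prop :=
  forall (x : 'I_n -> V) (s : 'S_n),
    br (fun i => x (s i)) = (-1) ^+ odd_perm s *: br x.

Definition fundamental_identity : Prop :=
  forall (x y : 'I_n -> V),
    br (setlast x (br y)) = \sum_(i < n) br (setarg y i (br (setlast x (y i)))).

Definition leibniz_rule : Prop :=
  forall (x : 'I_n -> V) (y z : V),
    br (setfirst x (mul y z)) = mul y (br (setfirst x z)) + mul z (br (setfirst x y)).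

Record poisson_nlie : Prop := {
  pnl_mul : comm_assoc_bilinear;
  pnl_lin : multilinear;
  pnl_skew : skew_symmetric;
  pnl_fi : fundamental_identity;
  pnl_leib : leibniz_rule }.

Inductive span (S : V -> Prop) : V -> Prop :=
| span_gen v : S v -> span S v
| span_zero : span S 0
| span_add u v : span S u -> span S v -> span S (u + v)
| span_scale a v : span S v -> span S (a *: v).

(* Ppow k = P^{k+1}:  P^1 = P,  P^{k+1} = [P^k,P,...,P] + P^k . P *)
Fixpoint Ppow (k : nat) : V -> Prop :=
  match k with
  | 0 => fun _ => True
  | k'.+1 => span (fun v =>
       (exists (y : V) (x : 'I_n -> V), Ppow k' y /\ v = br (setfirst x y))
    \/ (exists y z : V, Ppow k' y /\ v = mul y z))
  end.

(* Lpow k = L^{k+1}:  L^1 = P,  L^{k+1} = [L^k,P,...,P] *)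
Fixpoint Lpow (k : nat) : V -> Prop :=
  match k with
  | 0 => fun _ => True
  | k'.+1 => span (fun v =>
       exists (y : V) (x : 'I_n -> V), Lpow k' y /\ v = br (setfirst x y))
  end.

Definition nilpotent_P : Prop := exists s, forall v, Ppow s v -> v = 0.
Definition nilpotent_L : Prop := exists s, forall v, Lpow s v -> v = 0.
(* all products x0 * x1 * ... * xs of s+1 elements vanish *)
Definition nilpotent_A : Prop :=
  exists s, forall (x0 : V) (xs : seq V), size xs = s -> foldl mul x0 xs = 0.

End PoissonNLie.

(* Main.v *)
Require Import Defs.
From HB Require Import structures.
From mathcomp Require Import all_boot all_order all_algebra all_fingroup.
From Stdlib Require Import FunctionalExtensionality.
From mathcomp Require Import zify.
Set Implicit Arguments. Unset Strict Implicit. Unset Printing Implicit Defensive.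
Import GRing.Theory.
Local Open Scope ring_scope.
Local Notation span := Defs.span.

Lemma span_map (K : fieldType) (V : lmodType K) (S T : V -> Prop) (f : V -> V) :
  f 0 = 0 -> (forall u v, f (u + v) = f u + f v) -> (forall a u, f (a *: u) = a *: f u) ->
  (forall v, S v -> span T (f v)) -> forall v, span S v -> span T (f v).
Proof.
move=> f0 fD fZ hS v; elim => [w Sw|| u w _ IHu _ IHw | a w _ IH].
- exact: hS.
- rewrite f0; exact: span_zero.
- rewrite fD; exact: span_add.
- rewrite fZ; exact: span_scale.
Qed.

Lemma span_mono (K : fieldType) (V : lmodType K) (S T : V -> Prop) :
  (forall v, S v -> T v) -> forall v, span S v -> span T v.
Proof.
move=> h v sv; have := @span_map K V S T id erefl (fun _ _ => erefl) (fun _ _ => erefl).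
by apply=> // w /h; apply: span_gen.
Qed.

Lemma span_zeros (K : fieldType) (V : lmodType K) (S : V -> Prop) :
  (forall v, S v -> v = 0) -> forall v, span S v -> v = 0.
Proof.
move=> h v; elim => [w /h//||u w _ -> _ ->|a w _ ->]; by rewrite ?addr0 ?scaler0.
Qed.

Lemma span_idem (K : fieldType) (V : lmodType K) (S : V -> Prop) v :
  span (span S) v -> span S v.
Proof.
have := @span_map K V (span S) S id erefl (fun _ _ => erefl) (fun _ _ => erefl).
by apply.
Qed.

Inductive Good (K : fieldType) (V : lmodType K) (n : nat) (mul : V -> V -> V)
   (br : ('I_n -> V) -> V) : nat -> V -> Prop :=
| G_base a u : Lpow br a u -> Good mul br a u
| G_mul k p a w : Good mul br k p -> Lpow br a w -> Good mul br (k + a + 1) (mul p w).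

Lemma Lpow_dec (K : fieldType) (V : lmodType K) (n : nat) (br : ('I_n -> V) -> V) k v :
  Lpow br k.+1 v -> Lpow br k v.
Proof.
elim: k v => [//|k IH] v /=.
apply: span_mono => w [y [x [Ly ->]]]; exists y, x; split => //; exact: IH.
Qed.

Lemma Lpow_ge (K : fieldType) (V : lmodType K) (n : nat) (br : ('I_n -> V) -> V) k j v :
  (j <= k)%N -> Lpow br k v -> Lpow br j v.
Proof.
move=> /subnK <-; elim: (k - j)%N v => [//|d IH] v.
by rewrite addSn => /Lpow_dec /IH.
Qed.

Theorem proposition5p4 (K : fieldType) (V : lmodType K) (n : nat)
    (mul : V -> V -> V) (br : ('I_n -> V) -> V) :
  (2 <= n)%N -> poisson_nlie mul br ->
  (nilpotent_P mul br <-> nilpotent_A mul /\ nilpotent_L br).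
Proof.
move=> n2 [[mD mDr mC mA] mlin _ _ leib].
have mul0l : forall z, mul 0 z = 0.
  move=> z; have := mD 1 0 0 z; rewrite !scale1r addr0 => h.
  by apply: (addrI (mul 0 z)); rewrite addr0 -h.
have mul0r : forall z, mul z 0 = 0 by move=> z; rewrite mC.
have mulDl : forall u v w, mul (u + v) w = mul u w + mul v w.
  by move=> u v w; have := mD 1 u v w; rewrite !scale1r.
have mulZl : forall a u w, mul (a *: u) w = a *: mul u w.
  by move=> a u w; rewrite -[a *: u]addr0 mD mul0l addr0.
have n0 : (0 < n)%N by apply: leq_trans n2.
pose i0 := Ordinal n0.
have sf : forall (x : 'I_n -> V) (z : V), setfirst x z = setarg x i0 z.
  move=> x z; rewrite /setfirst /setarg; apply functional_extensionality => j.
  by [].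
have brD : forall (x : 'I_n -> V) (u v : V), br (setfirst x (u + v)) = br (setfirst x u) + br (setfirst x v).
  by move=> x u v; have := mlin x i0 1 u v; rewrite !scale1r -!sf.
have br0 : forall (x : 'I_n -> V), br (setfirst x 0) = 0.
  move=> x; have := brD x 0 0; rewrite addr0 => h.
  by apply: (addrI (br (setfirst x 0))); rewrite addr0 -h.
have brZ : forall (x : 'I_n -> V) (a : K) (u : V), br (setfirst x (a *: u)) = a *: br (setfirst x u).
  by move=> x a u; rewrite -[a *: u]addr0 !sf mlin -sf br0 addr0.
split.
- move=> [s Hs]; split.
  + have gen : forall xs k y, Ppow mul br k y -> Ppow mul br (k + size xs) (foldl mul y xs).
      elim => [|x xs IH] k y Py /=; first by rewrite addn0.
      rewrite addnS -addSn; apply: IH; apply: span_gen; right; by exists y, x.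
    exists s => x0 xs sz; apply: Hs; rewrite -sz.
    exact: (gen xs 0%N x0 I).
  + exists s => v Lv; apply: Hs.
    elim: s v Lv => [//|s IH] v /=; apply: span_mono => w [y [x [Ly ->]]].
    left; exists y, x; split => //; exact: IH.
- move=> [[s Hs] [t Ht]].
  have Hs' : forall x0 xs, (s <= size xs)%N -> foldl mul x0 xs = 0.
    move=> x0 xs le; rewrite -(cat_take_drop s xs) foldl_cat (Hs x0 (take s xs)); last by rewrite size_take_min (minn_idPl le).
    by elim: (drop s xs) => //= x r; rewrite mul0l.
  have gm : forall j q k p, Good mul br k p -> Good mul br j q -> Good mul br (k + j + 1) (mul p q).
    move=> j q k p Gp; elim => [a u Lu | j' q' a w Gq IH Lw]; first exact: G_mul.
    rewrite mA; have -> : (k + (j' + a + 1) + 1 = (k + j' + 1) + a + 1)%N by lia.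
    exact: G_mul.
  have gbr : forall k v, Good mul br k v -> forall x, span (Good mul br (k + 1)) (br (setfirst x v)).
    move=> k v; elim => [a u Lu | k' p a w Gp IH Lw] x.
    + apply: span_gen; apply: G_base; rewrite addn1 /=; apply: span_gen; by exists u, x.
    + rewrite leib; apply: span_add.
      * apply: span_gen; have -> : (k' + a + 1 + 1 = k' + (a + 1) + 1)%N by lia.
        apply: G_mul => //; rewrite addn1; apply: span_gen; by exists w, x.
      * apply: (@span_map K V (Good mul br (k' + 1)) _ (mul w) (mul0r w)) (IH x).
        -- by move=> u1 v1; rewrite mC mulDl mC (mC v1).
        -- by move=> b u1; rewrite mC mulZl mC.
        -- move=> q Gq; apply: span_gen.
           have -> : (k' + a + 1 + 1 = a + (k' + 1) + 1)%N by lia.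
           by apply: gm => //; apply: G_base.
  have PG : forall k v, Ppow mul br k v -> span (Good mul br k) v.
    elim => [|k IH] v /=; first by move=> _; apply: span_gen; apply: G_base.
    move=> Pv; apply: span_idem; apply: (span_mono _ Pv).
    move=> w [[y [x [Py ->]]]|[y [z [Py ->]]]].
    + rewrite -addn1; apply: (@span_map K V (Good mul br k) _ (fun y => br (setfirst x y)) (br0 x)) (IH _ Py).
      * by move=> ? ?; apply: brD.
      * by move=> ? ?; apply: brZ.
      * by move=> q Gq; apply: gbr.
    + apply: (@span_map K V (Good mul br k) _ (fun y => mul y z) (mul0l z)) (IH _ Py).
      * by move=> ? ?; apply: mulDl.
      * by move=> ? ?; apply: mulZl.
      * move=> q Gq; apply: span_gen.
        have -> : (k.+1 = k + 0 + 1)%N by rewrite addn0 addn1.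
        by apply: G_mul.
  have Lz : forall a u, (t <= a)%N -> Lpow br a u -> u = 0.
    by move=> a u le Lu; apply: Ht; apply: Lpow_ge Lu.
  have small : forall k v, Good mul br k v -> v = 0 \/
      exists x0 xs, v = foldl mul x0 xs /\ (k + 1 <= (size xs + 1) * t)%N.
    move=> k v; elim => [a u Lu | k' p a w Gp IH Lw].
    + case: (leqP t a) => ta; first by left; exact: Lz Lu.
      by right; exists u, [::]; rewrite /= add0n mul1n addn1.
    + case: IH => [->|[x0 [xs [-> le]]]]; first by left; rewrite mul0l.
      case: (leqP t a) => ta; first by left; rewrite (Lz _ _ ta Lw) mul0r.
      right; exists x0, (rcons xs w); rewrite -cats1 foldl_cat /= size_cat /=; split => //.
      nia.
  exists ((s + 1) * t)%N => v /PG; apply: span_zeros => g /small [//|[x0 [xs [-> le]]]].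
  apply: Hs'; rewrite leqNgt; apply/negP => lt.
  nia.
Qed.
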